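(* Let $\mathbf{SpFibPreord}$ denote the category whose objects are spatial fibrous preorders and whose morphisms are fibrous morphisms between them, two parallel fibrous morphisms $(f,f^* )$, $(g,g^* )$ being identified whenever $f=g$. Let $\mathbf{Top}$ be the category of topological spaces and continuous maps. Define $F\colon \mathbf{SpFibPreord}\to\mathbf{Top}$ as follows. For a spatial fibrous preorder $R\xrightarrow{\partial}A\xrightarrow{p}B$, let $F$ of it be $(B,\tau)$, where for $a\in A$ we set $N(a)=\{y\in B\mid aRy\}$ and $$\mathcal{O}\in\tau \iff \forall y\in\mathcal{O}\ \exists a\in A \text{ with } p(a)=y \text{ and } N(a)\subseteq\mathcal{O}.$$ For a morphism $(f,f^* )$, set $F(f,f^* )=f$. Define $G\colon\mathbf{Top}\to\mathbf{SpFibPreord}$ as follows. For a topological space $(B,\tau)$, let $G(B,\tau)$ be the fibrous preorder with $$A=\{(U,x)\mid x\in U\in\tau\},\qquad p(U,x)=x,\qquad (U,x)Ry\iff y\in U,\qquad \partial((U,x),y)=(U,y).$$ It is spatial via $s(x)=(B,x)$ and $m((U,x),(V,x))=(U\cap V,x)$. For a continuous map $f\colon(B,\tau)\to(B',\tau')$, let $G(f)=(f,f^* )$ with $f^*((U',x'),y)=(f^{-1}(U'),y)$ whenever $x'=f(y)$. Then $F$ and $G$ are well-defined functors, $FG=1_{\mathbf{Top}}$ (that is, $F(G(B,\tau))=(B,\tau)$ for every topological space), and $GF\sim 1$: for every spatial fibrous preorder $\mathbf{A}$, $GF(\mathbf{A})$ is equivalent to $\mathbf{A}$.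
   Context: A fibrous preorder is a sequence $R\xrightarrow{\partial}A\xrightarrow{p}B$ consisting of the following data: - sets $A$ and $B$; - a map $p\colon A\to B$; - a relation $R\subseteq A\times B$ (write $aRb$ for $(a,b)\in R$); - a map $\partial\colon R\to A$. These must satisfy, for all $a\in A$ and $b,y\in B$ with $aRb$: - (F1) $p\partial(a,b)=b$; - (F2) $aRp(a)$ (this holds for all $a\in A$); - (F3) $\partial(a,b)Ry\Rightarrow aRy$. Such a fibrous preorder is called spatial if there exist maps $s\colon B\to A$ and $m\colon A\times_BA\to A$, where $A\times_BA=\{(a,a')\in A\times A\mid p(a)=p(a')\}$, such that for all $a,a'\in A$ with $p(a)=p(a')$ and all $y\in B$: - (F4) $ps(y)=y$; - (F5) $pm(a,a')=p(a)$; - (F6) $m(a,a')Ry\Rightarrow (aRy \text{ and } a'Ry)$. Spatiality is a property; $s$ and $m$ are not part of the data. Given fibrous preorders $\mathbf{A}=(R,A,B,p,\partial)$ and $\mathbf{A}'=(R',A',B',p',\partial')$, a fibrous morphism $\mathbf{A}\to\mathbf{A}'$ is a pair $(f,f^* )$ with $f\colon B\to B'$ a map and $f^*\colon A'_f\to A$ a map, where $A'_f=\{(a',b)\in A'\times B\mid p'(a')=f(b)\}$. These must satisfy, for all $(a',b)\in A'_f$ and $y\in B$: - $pf^*(a',b)=b$; - $f^*(a',b)Ry\Rightarrow a'R'f(y)$. Composition is $(g,g^* )\circ(f,f^* )=(gf,h)$ with $h(a'',b)=f^*(g^*(a'',f(b)),b)$. Two fibrous preorders $(R,A,B,p,\partial)$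 and $(R',A',B',p',\partial')$ are equivalent if $B=B'$ and the identity map $1_B$ underlies a fibrous morphism in each direction. Equivalently: $B=B'$ and there exist maps $\varphi\colon A\to A'$ and $\gamma\colon A'\to A$ with $p'\varphi=p$ and $p\gamma=p'$ such that, for all $a\in A$, $a'\in A'$ and $b\in B$, $\varphi(a)R'b\Rightarrow aRb$ and $\gamma(a')Rb\Rightarrow a'R'b$. *)

(* Defs.v *)
Set Implicit Arguments.

Record FibPreord (B : Type) := {
  fp_A : Type;
  fp_p : fp_A -> B;
  fp_R : fp_A -> B -> Prop;
  (* ∂ : R -> A, R viewed as the set of pairs (a,b) with aRb *)
  fp_d : forall (a : fp_A) (b : B), fp_R a b -> fp_A
}.
Arguments fp_A {B}. Arguments fp_p {B}. Arguments fp_R {B}. Arguments fp_d {B}.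

Definition is_fibrous (B : Type) (X : FibPreord B) : Prop :=
  (forall a b (h : fp_R X a b), fp_p X (fp_d X a b h) = b) /\          (* F1 *)
  (forall a, fp_R X a (fp_p X a)) /\                                    (* F2 *)
  (forall a b (h : fp_R X a b) y,
      fp_R X (fp_d X a b h) y -> fp_R X a y).                           (* F3 *)

Definition spatial (B : Type) (X : FibPreord B) : Prop :=
  exists (s : B -> fp_A X)
         (m : forall a a' : fp_A X, fp_p X a = fp_p X a' -> fp_A X),
    (forall y, fp_p X (s y) = y) /\
    (forall a a' (e : fp_p X a = fp_p X a'), fp_p X (m a a' e) = fp_p X a) /\
    (forall a a' (e : fp_p X a = fp_p X a') y,
        fp_R X (m a a' e) y -> fp_R X a y /\ fp_R X a' y).

(** Fibrous morphism (f, f^* ) : X -> Y, where f^* is defined on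
    A'_f = {(a',b) | p'(a') = f(b)}. *)
Definition is_fib_morphism (B B' : Type) (X : FibPreord B) (Y : FibPreord B')
  (f : B -> B') (fs : forall (a' : fp_A Y) (b : B), fp_p Y a' = f b -> fp_A X) : Prop :=
  (forall a' b (e : fp_p Y a' = f b), fp_p X (fs a' b e) = b) /\
  (forall a' b (e : fp_p Y a' = f b) y,
      fp_R X (fs a' b e) y -> fp_R Y a' (f y)).

Definition fib_equivalent (B : Type) (X Y : FibPreord B) : Prop :=
  (exists fs : forall (a' : fp_A Y) (b : B), fp_p Y a' = b -> fp_A X,
      is_fib_morphism X Y (fun b => b) fs) /\
  (exists gs : forall (a : fp_A X) (b : B), fp_p X a = b -> fp_A Y,
      is_fib_morphism Y X (fun b => b) gs).

Record Top := {
  carrier : Type;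
  isOpen : (carrier -> Prop) -> Prop
}.

Definition is_topology (T : Top) : Prop :=
  isOpen T (fun _ => True) /\
  (forall U V, isOpen T U -> isOpen T V -> isOpen T (fun x => U x /\ V x)) /\
  (forall S : (carrier T -> Prop) -> Prop,
      (forall U, S U -> isOpen T U) -> isOpen T (fun x => exists U, S U /\ U x)).

Definition continuous (T T' : Top) (f : carrier T -> carrier T') : Prop :=
  forall O, isOpen T' O -> isOpen T (fun x => O (f x)).

Definition F_open (B : Type) (X : FibPreord B) (O : B -> Prop) : Prop :=
  forall y, O y -> exists a, fp_p X a = y /\ (forall z, fp_R X a z -> O z).

Definition F_obj (B : Type) (X : FibPreord B) : Top :=
  {| carrier := B; isOpen := F_open X |}.
(* On morphisms, F (f, f^* ) = f. *)

Definition G_A (T : Top) : Type :=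
  { ux : (carrier T -> Prop) * carrier T | isOpen T (fst ux) /\ fst ux (snd ux) }.

Definition G_obj (T : Top) : FibPreord (carrier T) :=
  {| fp_A := G_A T;
     fp_p := fun a => snd (proj1_sig a);
     fp_R := fun a y => fst (proj1_sig a) y;
     fp_d := fun a y h =>
       exist _ (fst (proj1_sig a), y) (conj (proj1 (proj2_sig a)) h) |}.

(* f^*((U',x'), y) = (f^{-1}(U'), y) when x' = f y; the first component of G(f) is f. *)
Definition G_mor (T T' : Top) (f : carrier T -> carrier T') (hf : continuous T T' f)
  (a' : G_A T') (b : carrier T) (e : snd (proj1_sig a') = f b) : G_A T :=
  exist _ ((fun z => fst (proj1_sig a') (f z)), b)
    (conj (hf _ (proj1 (proj2_sig a')))
          (eq_ind _ (fun w => fst (proj1_sig a') w) (proj2 (proj2_sig a')) _ e)).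

(* Main.v *)
Require Import Defs.
From Stdlib Require Import FunctionalExtensionality PropExtensionality ClassicalEpsilon.

Theorem mainTheorem1 :
  (* F is well defined on objects: F(A) is a topological space *)
  (forall (B : Type) (X : FibPreord B),
      is_fibrous X -> spatial X -> is_topology (F_obj X)) /\
  (* F is well defined on morphisms: F(f, f^* ) = f is continuous *)
  (forall (B B' : Type) (X : FibPreord B) (Y : FibPreord B')
          (f : B -> B') (fs : forall (a' : fp_A Y) (b : B), fp_p Y a' = f b -> fp_A X),
      is_fibrous X -> spatial X -> is_fibrous Y -> spatial Y ->
      is_fib_morphism X Y f fs ->
      continuous (F_obj X) (F_obj Y) f) /\
  (* G is well defined on objects: G(B, tau) is a spatial fibrous preorder *)
  (forall T : Top, is_topology T -> is_fibrous (G_obj T) /\ spatial (G_obj T)) /\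
  (* G is well defined on morphisms: G(f) = (f, f^* ) is a fibrous morphism *)
  (forall (T T' : Top) (f : carrier T -> carrier T') (hf : continuous T T' f),
      is_topology T -> is_topology T' ->
      is_fib_morphism (G_obj T) (G_obj T') f (G_mor hf)) /\
  (* F G = 1 on objects *)
  (forall T : Top, is_topology T ->
      forall O : carrier T -> Prop, isOpen (F_obj (G_obj T)) O <-> isOpen T O) /\
  (* G F ~ 1 *)
  (forall (B : Type) (X : FibPreord B),
      is_fibrous X -> spatial X -> fib_equivalent (G_obj (F_obj X)) X).
Proof.
  split; [|split; [|split; [|split; [|split]]]].
  - intros B X [F1 [F2 F3]] [s [m [F4 [F5 F6]]]]. split; [|split].
    + intros y _. exists (s y). split; auto.
    + intros U V hU hV y [Uy Vy].
      destruct (hU y Uy) as [a [pa Na]]. destruct (hV y Vy) as [a' [pa' Na']].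
      assert (e : fp_p X a = fp_p X a') by congruence.
      exists (m a a' e). split. rewrite F5; auto.
      intros z hz. destruct (F6 _ _ _ _ hz). auto.
    + intros S hS y [U [SU Uy]]. destruct (hS U SU y Uy) as [a [pa Na]].
      exists a. split; auto. intros z hz. exists U; auto.
  - intros B B' X Y f fs _ _ _ _ [M1 M2] O hO y Oy.
    destruct (hO _ Oy) as [a' [pa Na]].
    exists (fs a' y pa). split; [apply M1|]. intros z hz. apply Na. eapply M2; eauto.
  - intros T [Ht [Hi Hu]]. split.
    + split; [|split]; simpl.
      * reflexivity.
      * intros a. exact (proj2 (proj2_sig a)).
      * auto.
    + unshelve eexists (fun y => exist _ ((fun _ => True), y) (conj Ht I)).
      unshelve eexists.
      { intros a a' e. refine (exist _ ((fun z => fst (proj1_sig a) z /\ fst (proj1_sig a') z), snd (proj1_sig a)) _).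
        simpl. split. apply Hi; [exact (proj1 (proj2_sig a)) | exact (proj1 (proj2_sig a'))].
        split. exact (proj2 (proj2_sig a)). simpl in e. rewrite e. exact (proj2 (proj2_sig a')). }
      simpl. split; [|split]; auto.
  - intros T T' f hf _ _. split; simpl; auto.
  - intros T [Ht [Hi Hu]] O. simpl. split.
    + intros hO.
      assert (E : O = (fun x => exists U, (isOpen T U /\ forall z, U z -> O z) /\ U x)).
      { apply functional_extensionality; intro x; apply propositional_extensionality; split.
        - intros Ox. destruct (hO x Ox) as [[[U y] [hU Uy]] [py NU]]. simpl in *. subst.
          exists U. split; auto.
        - intros [U [[_ h] Ux]]. auto. }
      rewrite E. apply Hu. intros U [h _]; exact h.
    + intros hO y Oy. exists (exist _ (O, y) (conj hO Oy)). simpl. auto.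
  - intros B X [F1 [F2 F3]] _. split.
    + unshelve eexists.
      { intros a' b e. refine (exist _ (fp_R X a', b) (conj _ _)); simpl.
        - intros y h. exists (fp_d X a' y h). split; auto. intros z hz. eapply F3; eauto.
        - rewrite <- e. apply F2. }
      split; simpl; auto.
    + unshelve eexists.
      { intros a b e. exact (proj1_sig (constructive_indefinite_description _
            ((proj1 (proj2_sig a)) b (eq_ind _ _ (proj2 (proj2_sig a)) _ e)))). }
      split; simpl.
      * intros a b e. destruct (constructive_indefinite_description _ _) as [x [px Nx]]. exact px.
      * intros a b e y. destruct (constructive_indefinite_description _ _) as [x [px Nx]]. exact (Nx y).
Qed.
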